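(* For any covector $p_a$ at a point, the adjugate (classical adjoint) $A_b{}^a$ of the linear map $\mathcal{M}_b{}^d$ is $$A_b{}^a=-8\mathcal{L}_F\big(M(p_cp^c)^2+N\,p_cp^c\,u_du^d+P(u_du^d)^2\big)\,p_bp^a .$$ Consequently, $\mathcal{M}_b{}^d$ has a kernel of dimension at least two if and only if $\mathcal{L}_F\big(M(p_cp^c)^2+Np_cp^cu_du^d+P(u_du^d)^2\big)=0$; if $\mathcal{L}_F\neq0$ and $M\neq0$ this is equivalent to $(\tilde g_+^{bc}p_bp_c)(\tilde g_-^{de}p_dp_e)=0$.
   Context: Let $F_{ab}$ be an antisymmetric tensor on an oriented 4-dimensional Lorentzian manifold with metric $g_{ab}$ (signature $(-,+,+,+)$; indices moved with $g$), $\varepsilon_{abcd}$ the volume form, ${}^{*}F_{ab}=\frac12\varepsilon_{abcd}F^{cd}$, $F=\frac12F_{ab}F^{ab}$, $G=-\frac14F_{ab}{}^{*}F^{ab}$. Let $\mathcal{L}(F,G)$ be smooth with partial derivatives $\mathcal{L}_F,\mathcal{L}_{FF},\mathcal{L}_{FG},\mathcal{L}_{GG}$ evaluated at the background invariants. $P=\mathcal{L}_{FF}\mathcal{L}_{GG}-\mathcal{L}_{FG}^2$, $M=\mathcal{L}_F^2+2\mathcal{L}_F\mathcal{L}_{FG}G-\frac12\mathcal{L}_F\mathcal{L}_{GG}F-PG^2$, $N=2\mathcal{L}_F\mathcal{L}_{FF}+\frac12\mathcal{L}_F\mathcal{L}_{GG}-PF$, $\sigma_\pm=\frac{N}{2M}\pm\sqrt{\frac{N^2}{4M^2}-\frac{P}{M}}$,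 optical metrics $\tilde g_\pm^{bc}=g^{bc}+\sigma_\pm F^{bd}F^{c}{}_{d}$. For a covector $p_a$ put $u_a=F_{ab}p^b$, $v_a={}^{*}F_{ab}p^b$ and $\mathcal{M}_b{}^d=-2\mathcal{L}_Fp_ap^a\delta_b^d+2\mathcal{L}_Fp_bp^d-4\mathcal{L}_{FF}u_bu^d+2\mathcal{L}_{FG}(u_bv^d+v_bu^d)-\mathcal{L}_{GG}v_bv^d$. *)

(* Defs.v *)
(* Pointwise (tangent-space) algebra at one point of the
   4-dimensional Lorentzian manifold, in an arbitrary coordinate basis.
   Scalars live in a numClosedFieldType C (e.g. algC); all given data are
   required to be real, but sigma_pm (which contains a square root of a
   possibly negative discriminant) may be complex, as in the paper. *)
From HB Require Import structures.
From mathcomp Require Import all_boot all_order all_algebra.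
Set Implicit Arguments. Unset Strict Implicit. Unset Printing Implicit Defensive.
Import Order.TTheory GRing.Theory Num.Theory.
Local Open Scope ring_scope.

Section Defs.
Variable C : numClosedFieldType.
Local Notation M4 := 'M[C]_4.

Definition eta4 : M4 := \matrix_(i < 4, j < 4)
  (if i == j then (if i == 0 :> nat then -1 else 1) else 0).

Definition ginv (g : M4) : M4 := invmx g.

(* Levi-Civita symbol [abcd] (sign of the permutation, 0 if indices repeat) *)
Definition levi (a b c d : 'I_4) : C :=
  \det (\matrix_(i < 4, j < 4) ((tnth [tuple a; b; c; d] i == j)%:R : C)).

(* volume form eps_{abcd}, for an oriented orthonormal frame E
   (columns E_{.mu} = e_mu^a, with E^T g E = eta): eps(e_0,e_1,e_2,e_3)=1 *)
Definition eps (E : M4) (a b c d : 'I_4) : C := levi a b c d / \det E.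

Definition Fup (g F : M4) (a b : 'I_4) : C :=
  \sum_(c < 4) \sum_(d < 4) ginv g a c * ginv g b d * F c d.

Definition Fdual (g E F : M4) (a b : 'I_4) : C :=
  2^-1 * \sum_(c < 4) \sum_(d < 4) eps E a b c d * Fup g F c d.

Definition Fdualup (g E F : M4) (a b : 'I_4) : C :=
  \sum_(c < 4) \sum_(d < 4) ginv g a c * ginv g b d * Fdual g E F c d.

Definition Finv (g F : M4) : C :=
  2^-1 * \sum_(a < 4) \sum_(b < 4) F a b * Fup g F a b.
Definition Ginv (g E F : M4) : C :=
  - 4^-1 * \sum_(a < 4) \sum_(b < 4) F a b * Fdualup g E F a b.

Definition Pc (LFF LFG LGG : C) : C := LFF * LGG - LFG ^+ 2.
Definition Mc (LF LFF LFG LGG Fv Gv : C) : C :=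
  LF ^+ 2 + 2 * LF * LFG * Gv - 2^-1 * LF * LGG * Fv
  - Pc LFF LFG LGG * Gv ^+ 2.
Definition Nc (LF LFF LFG LGG Fv : C) : C :=
  2 * LF * LFF + 2^-1 * LF * LGG - Pc LFF LFG LGG * Fv.

Definition sigma (plus : bool) (M N P : C) : C :=
  N / (2 * M) + (if plus then 1 else -1) *
    sqrtC (N ^+ 2 / (4 * M ^+ 2) - P / M).

Definition raise (g : M4) (p : 'I_4 -> C) (a : 'I_4) : C :=
  \sum_(b < 4) ginv g a b * p b.

Definition dot (g : M4) (X Y : 'I_4 -> C) : C :=
  \sum_(a < 4) X a * raise g Y a.

Definition uvec (g F : M4) (p : 'I_4 -> C) (a : 'I_4) : C :=
  \sum_(b < 4) F a b * raise g p b.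
Definition vvec (g E F : M4) (p : 'I_4 -> C) (a : 'I_4) : C :=
  \sum_(b < 4) Fdual g E F a b * raise g p b.

(* the matrix M_b^d  (row index b, column index d) *)
Definition Mmat (g E F : M4) (LF LFF LFG LGG : C) (p : 'I_4 -> C) : M4 :=
  let u := uvec g F p in let v := vvec g E F p in
  let pu := raise g p in let uu := raise g u in let vu := raise g v in
  \matrix_(b < 4, d < 4)
    (- 2 * LF * dot g p p * (b == d)%:R + 2 * LF * p b * pu d
     - 4 * LFF * u b * uu d + 2 * LFG * (u b * vu d + v b * uu d)
     - LGG * v b * vu d).

Definition optical (g F : M4) (sig : C) (p : 'I_4 -> C) : C :=
  \sum_(b < 4) \sum_(c < 4)
    (ginv g b c + sig * \sum_(d < 4) Fup g F b d *
        (\sum_(e < 4) Fup g F c e * g e d)) * p b * p c.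

End Defs.

(* Main.v *)
Require Import Defs.
From HB Require Import structures.
From mathcomp Require Import all_boot all_order all_algebra.
From mathcomp Require Import perm.
From mathcomp.algebra_tactics Require Import ring.
Set Implicit Arguments. Unset Strict Implicit. Unset Printing Implicit Defensive.
Import Order.TTheory GRing.Theory Num.Theory.
Local Open Scope ring_scope.

Section Det.
Variable R : comNzRingType.

Definition det3e (f : nat -> nat -> R) : R :=
  f 0 0 * (f 1 1 * f 2 2 - f 1 2 * f 2 1)
  - f 0 1 * (f 1 0 * f 2 2 - f 1 2 * f 2 0)
  + f 0 2 * (f 1 0 * f 2 1 - f 1 1 * f 2 0).

Lemma det2f (f : nat -> nat -> R) :
  \det (\matrix_(i < 2, j < 2) f i j) = f 0 0 * f 1 1 - f 0 1 * f 1 0.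
Proof.
rewrite (expand_det_row _ ord0) !big_ord_recr big_ord0 /= add0r.
rewrite /cofactor !mxE /=.
rewrite !det_mx11 !mxE /=.
rewrite !expr0 !expr1 /=. ring.
Qed.

Lemma det3f (f : nat -> nat -> R) :
  \det (\matrix_(i < 3, j < 3) f i j) = det3e f.
Proof.
rewrite (expand_det_row _ ord0) !big_ord_recr big_ord0 /= add0r.
rewrite /cofactor !mxE /=.
have H : forall j : 'I_3, \det (row' ord0 (col' j (\matrix_(i < 3, j < 3) f i j))) =
   let g := fun x y => f (bump 0 x) (bump j y) in g 0 0 * g 1 1 - g 0 1 * g 1 0.
  move=> j; rewrite /= -(det2f (fun x y => f (bump 0 x) (bump j y))).
  by congr (\det _); apply/matrixP => i k; rewrite !mxE.
rewrite !H /= /det3e /bump /=.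
rewrite !expr0 /=. ring.
Qed.

Lemma adj4f (f : nat -> nat -> R) (b a : 'I_4) :
  \adj (\matrix_(i < 4, j < 4) f i j) b a =
  (-1) ^+ (a + b) * det3e (fun i j => f (bump a i) (bump b j)).
Proof.
rewrite /adjugate mxE /cofactor -det3f; congr (_ * _).
by congr (\det _); apply/matrixP => i j; rewrite !mxE.
Qed.
End Det.


Section Levi.
Variable C : numClosedFieldType.

Definition det4e (f : nat -> nat -> C) : C :=
  f 0 0 * det3e (fun x y => f (bump 0 x) (bump 0 y))
  - f 0 1 * det3e (fun x y => f (bump 0 x) (bump 1 y))
  + f 0 2 * det3e (fun x y => f (bump 0 x) (bump 2 y))
  - f 0 3 * det3e (fun x y => f (bump 0 x) (bump 3 y)).

Lemma det4f (f : nat -> nat -> C) :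
  \det (\matrix_(i < 4, j < 4) f i j) = det4e f.
Proof.
rewrite (expand_det_row _ ord0) !big_ord_recr big_ord0 /= add0r.
rewrite /cofactor !mxE /=.
have H : forall j : 'I_4, \det (row' ord0 (col' j (\matrix_(i < 4, j < 4) f i j))) =
   det3e (fun x y => f (bump 0 x) (bump j y)).
  move=> j; rewrite -det3f.
  by congr (\det _); apply/matrixP => i k; rewrite !mxE.
rewrite !H /det4e /=.
rewrite !expr0 /=. ring.
Qed.

Lemma levi_nat (a b c d : 'I_4) :
  levi C a b c d = det4e (fun i j => (nth 0%N [:: val a; val b; val c; val d] i == j)%:R).
Proof.
rewrite /levi -det4f; congr (\det _); apply/matrixP => i j; rewrite !mxE.
by case: i => [[|[|[|[|i]]]] Hi].
Qed.

Lemma sum_pick (F : 'I_4 -> C) x : (forall a, a != x -> F a = 0) -> \sum_a F a = F x.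
Proof.
move=> H; rewrite (bigD1 x) //= big1 ?addr0 // => a /H //.
Qed.

Lemma nb0 (b : bool) : b = false -> (b%:R : C) = 0. Proof. by move->. Qed.
Lemma nb1 : (true%:R : C) = 1. Proof. by []. Qed.

Lemma levi_contract (E : 'M[C]_4) al be ga de :
  \sum_(a < 4) \sum_(b < 4) \sum_(c < 4) \sum_(d < 4)
     E a al * E b be * E c ga * E d de * levi C a b c d
  = \det E * levi C al be ga de.
Proof.
have -> : \det E * levi C al be ga de = \sum_(s : 'S_4) (-1) ^+ s *
   \prod_(i < 4) E (s i) (tnth [tuple al; be; ga; de] i).
  rewrite mulrC -det_tr /levi -det_mulmx /determinant.
  apply: eq_bigr => s _; congr (_ * _); apply: eq_bigr => i _.
  rewrite !mxE; set t := tnth _ i; rewrite (sum_pick (x := t)).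
    by rewrite !mxE eqxx mul1r.
  move=> k Hk; rewrite mxE -/t.
  have -> : (t == k) = false by rewrite eq_sym (negbTE Hk).
  by rewrite mul0r.
rewrite /levi /determinant.
under eq_bigr => a _ do under eq_bigr => b _ do under eq_bigr => c _ do
  under eq_bigr => d _ do rewrite mulr_sumr.
under eq_bigr => a _ do under eq_bigr => b _ do under eq_bigr => c _ do
  rewrite exchange_big.
under eq_bigr => a _ do under eq_bigr => b _ do rewrite exchange_big.
under eq_bigr => a _ do rewrite exchange_big.
rewrite exchange_big; apply: eq_bigr => s _.
move: ((-1) ^+ s : C) => sg.
under eq_bigr => a _ do under eq_bigr => b _ do under eq_bigr => c _ do
  under eq_bigr => d _ do rewrite !big_ord_recr big_ord0 !mxE !(tnth_nth ord0) /=.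
rewrite [in RHS]big_ord_recr [in RHS]big_ord_recr [in RHS]big_ord_recr [in RHS]big_ord_recr [in RHS]big_ord0 !(tnth_nth ord0) /=.
set k0 := widen_ord _ (widen_ord _ (widen_ord _ ord_max)).
set k1 := widen_ord _ (widen_ord _ ord_max).
set k2 := widen_ord _ ord_max.
rewrite (sum_pick (x := s k0)); last first.
  move=> a Ha; rewrite big1 // => b _; rewrite big1 // => c _; rewrite big1 // => d _.
  by rewrite (nb0 (negbTE Ha)) !(mulr0, mul0r).
rewrite (sum_pick (x := s k1)); last first.
  move=> b Hb; rewrite big1 // => c _; rewrite big1 // => d _.
  by rewrite (nb0 (negbTE Hb)) !(mulr0, mul0r).
rewrite (sum_pick (x := s k2)); last first.
  move=> c Hc; rewrite big1 // => d _.
  by rewrite (nb0 (negbTE Hc)) !(mulr0, mul0r).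
rewrite (sum_pick (x := s ord_max)); last first.
  by move=> d Hd; rewrite (nb0 (negbTE Hd)) !(mulr0, mul0r).
rewrite !eqxx !nb1; ring.
Qed.
End Levi.


Section Glue.
Variable C : numClosedFieldType.

Definition etaf (x y : nat) : C := if x == y then (if x == 0%N then -1 else 1) else 0.

Lemma eta_nat : eta4 C = \matrix_(i < 4, j < 4) etaf i j.
Proof. by apply/matrixP => i j; rewrite !mxE. Qed.

Lemma eta_tr : (eta4 C)^T = eta4 C.
Proof.
apply/matrixP => i j; rewrite !mxE.
by case: i => [[|[|[|[|i]]]] Hi] //; case: j => [[|[|[|[|j]]]] Hj].
Qed.

Lemma eta_mul : eta4 C *m eta4 C = 1.
Proof.
apply/matrixP => i j; rewrite eta_nat !mxE !big_ord_recr big_ord0 /= !mxE.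
by case: i => [[|[|[|[|i]]]] Hi] //; case: j => [[|[|[|[|j]]]] Hj] //=; rewrite /etaf /=; ring.
Qed.

Lemma eta_det : \det (eta4 C) = -1.
Proof.
rewrite eta_nat (det4f (fun x y => etaf x y)) /det4e /det3e /bump /etaf /=; ring.
Qed.

Lemma swap2 (F : 'I_4 -> 'I_4 -> C) (G : 'I_4 -> 'I_4 -> 'I_4 -> 'I_4 -> C) :
  \sum_x \sum_y F x y * (\sum_g \sum_d G x y g d) =
  \sum_g \sum_d \sum_x \sum_y F x y * G x y g d.
Proof.
under eq_bigr => x _ do under eq_bigr => y _ do
  (rewrite mulr_sumr; under eq_bigr => g _ do rewrite mulr_sumr).
under eq_bigr => x _ do rewrite exchange_big.
under eq_bigr => x _ do under eq_bigr => g _ do rewrite exchange_big.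
rewrite exchange_big; apply: eq_bigr => g _.
by rewrite exchange_big.
Qed.

Lemma sum_tr (A B : 'M[C]_4) :
  \sum_(a < 4) \sum_(b < 4) A a b * B a b = \tr (A^T *m B).
Proof.
rewrite /mxtrace exchange_big; apply: eq_bigr => i _; rewrite mxE.
by apply: eq_bigr => k _; rewrite mxE.
Qed.

Lemma mulmx_entry3 (E X : 'M[C]_4) c d :
  (E *m X *m E^T) c d = \sum_g \sum_e E c g * X g e * E d e.
Proof.
rewrite mxE; under eq_bigr => e _ do rewrite !mxE mulr_suml.
by rewrite exchange_big.
Qed.

Lemma dual_contract (E X : 'M[C]_4) al be : \det E != 0 ->
  \sum_b (\sum_a E a al * (2^-1 * \sum_c \sum_d levi C a b c d / \det E *
        (E *m X *m E^T) c d)) * E b be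
  = 2^-1 * \sum_c \sum_d levi C al be c d * X c d.
Proof.
move=> dE.
have inner : forall a b, \sum_c \sum_d levi C a b c d / \det E * (E *m X *m E^T) c d
   = \sum_g \sum_e X g e * (\sum_c \sum_d E c g * E d e * levi C a b c d / \det E).
  move=> a b.
  under eq_bigr => c _ do under eq_bigr => d _ do rewrite mulmx_entry3.
  rewrite swap2; apply: eq_bigr => g _; apply: eq_bigr => e _.
  rewrite mulr_sumr; apply: eq_bigr => c _; rewrite mulr_sumr; apply: eq_bigr => d _.
  ring.
under eq_bigr => b _ do under eq_bigr => a _ do rewrite inner.
under eq_bigr => b _ do rewrite mulr_suml.
rewrite [LHS]exchange_big /=.
have re : forall x y z w : C, x * (y * z) * w = (y * x * w) * z by move=> *; ring.
under eq_bigr => a _ do under eq_bigr => b _ do rewrite re.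
rewrite swap2 mulr_sumr; apply: eq_bigr => g _; rewrite mulr_sumr; apply: eq_bigr => e _.
transitivity (2^-1 * X g e / \det E * \sum_a \sum_b \sum_c \sum_d
    E a al * E b be * E c g * E d e * levi C a b c d).
  rewrite mulr_sumr; apply: eq_bigr => a _; rewrite mulr_sumr; apply: eq_bigr => b _.
  rewrite !mulr_sumr; apply: eq_bigr => c _; rewrite !mulr_sumr; apply: eq_bigr => d _.
  ring.
rewrite levi_contract; by field.
Qed.
End Glue.


Section Frame.
Variable C : numClosedFieldType.
Variables (f01 f02 f03 f12 f13 f23 q0 q1 q2 q3 LF LFF LFG LGG : C).

Definition pl k := nth 0 [:: q0; q1; q2; q3] k.
Definition pe k := nth 0 [:: - q0; q1; q2; q3] k.
Definition ul k := nth 0 [:: f01 * q1 + f02 * q2 + f03 * q3; f01 * q0 + f12 * q2 + f13 * q3;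
   f02 * q0 - f12 * q1 + f23 * q3; f03 * q0 - f13 * q1 - f23 * q2] k.
Definition ue k := nth 0 [:: - (f01 * q1 + f02 * q2 + f03 * q3); f01 * q0 + f12 * q2 + f13 * q3;
   f02 * q0 - f12 * q1 + f23 * q3; f03 * q0 - f13 * q1 - f23 * q2] k.
Definition vl k := nth 0 [:: f23 * q1 - f13 * q2 + f12 * q3; f23 * q0 - f03 * q2 + f02 * q3;
   - f13 * q0 + f03 * q1 - f01 * q3; f12 * q0 - f02 * q1 + f01 * q2] k.
Definition ve k := nth 0 [:: - (f23 * q1 - f13 * q2 + f12 * q3); f23 * q0 - f03 * q2 + f02 * q3;
   - f13 * q0 + f03 * q1 - f01 * q3; f12 * q0 - f02 * q1 + f01 * q2] k.
Definition ppf := - q0 ^+ 2 + q1 ^+ 2 + q2 ^+ 2 + q3 ^+ 2.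
Definition uuf := ul 0 * ue 0 + ul 1 * ue 1 + ul 2 * ue 2 + ul 3 * ue 3.
Definition Fvf := - (f01 ^+ 2 + f02 ^+ 2 + f03 ^+ 2) + f12 ^+ 2 + f13 ^+ 2 + f23 ^+ 2.
Definition Gvf := f01 * f23 - f02 * f13 + f03 * f12.
Definition Pf := LFF * LGG - LFG ^+ 2.
Definition Mf := LF ^+ 2 + 2 * LF * LFG * Gvf - 2^-1 * LF * LGG * Fvf - Pf * Gvf ^+ 2.
Definition Nf := 2 * LF * LFF + 2^-1 * LF * LGG - Pf * Fvf.
Definition Qf := Mf * ppf ^+ 2 + Nf * ppf * uuf + Pf * uuf ^+ 2.
Definition mef (b d : nat) : C := - 2 * LF * ppf * (b == d)%:R + 2 * LF * pl b * pe d
  - 4 * LFF * ul b * ue d + 2 * LFG * (ul b * ve d + vl b * ue d) - LGG * vl b * ve d.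

Lemma two_neq0 : (2 : C) != 0.
Proof. by rewrite pnatr_eq0. Qed.

Lemma frame_adj (b a : 'I_4) :
  \adj (\matrix_(i < 4, j < 4) mef i j) b a = - 8 * LF * Qf * pl b * pe a.
Proof.
rewrite adj4f.
have h2 := two_neq0.
case: b => [[|[|[|[|b]]]] Hb] //; case: a => [[|[|[|[|a]]]] Ha] //;
 rewrite /det3e /bump /= /mef /Qf /Mf /Nf /Pf /Fvf /Gvf /ppf /uuf /pl /pe /ul /ue /vl /ve /=;
 by field.
Qed.

Definition Fn (i j : nat) : C := nth 0 (nth [::] [:: [:: 0; f01; f02; f03]; [:: - f01; 0; f12; f13];
   [:: - f02; - f12; 0; f23]; [:: - f03; - f13; - f23; 0]] i) j.
Definition Dn (i j : nat) : C := nth 0 (nth [::] [:: [:: 0; f23; - f13; f12]; [:: - f23; 0; - f03; f02];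
   [:: f13; f03; 0; - f01]; [:: - f12; - f02; f01; 0]] i) j.
Definition Xn (i j : nat) : C := etaf C i i * Fn i j * etaf C j j.
Local Notation Fm := (\matrix_(i < 4, j < 4) Fn i j).
Local Notation Dm := (\matrix_(i < 4, j < 4) Dn i j).
Local Notation Pc := (\col_(i < 4) pl i).
Local Notation Uc := (\col_(i < 4) ul i).
Local Notation Vc := (\col_(i < 4) vl i).

Lemma X_comp : eta4 C *m Fm *m eta4 C = \matrix_(i < 4, j < 4) Xn i j.
Proof.
rewrite eta_nat; apply/matrixP => i j; rewrite !mxE !big_ord_recr !big_ord0 /= !mxE.
rewrite !big_ord_recr !big_ord0 /= !mxE.
case: i => [[|[|[|[|i]]]] Hi] //; case: j => [[|[|[|[|j]]]] Hj] //;
  rewrite /Xn /Fn /etaf /=; ring.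
Qed.

Lemma Fd_comp : \matrix_(al < 4, be < 4)
   (2^-1 * \sum_(c < 4) \sum_(d < 4) levi C al be c d * (\matrix_(i < 4, j < 4) Xn i j) c d) = Dm.
Proof.
have h2 := two_neq0.
apply/matrixP => al be; rewrite !mxE.
under eq_bigr => c _ do under eq_bigr => d _ do rewrite levi_nat mxE.
rewrite !big_ord_recr !big_ord0 /=.
case: al => [[|[|[|[|al]]]] Ha] //; case: be => [[|[|[|[|be]]]] Hb] //;
  rewrite /det4e /det3e /bump /Xn /Fn /Dn /etaf /=; by field.
Qed.

Lemma u_comp : Fm *m eta4 C *m Pc = Uc.
Proof.
rewrite eta_nat; apply/matrixP => i j; rewrite (ord1 j) !mxE !big_ord_recr !big_ord0 /= !mxE.
rewrite !big_ord_recr !big_ord0 /= !mxE.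
case: i => [[|[|[|[|i]]]] Hi] //; rewrite /ul /pl /Fn /etaf /=; ring.
Qed.

Lemma v_comp : Dm *m eta4 C *m Pc = Vc.
Proof.
rewrite eta_nat; apply/matrixP => i j; rewrite (ord1 j) !mxE !big_ord_recr !big_ord0 /= !mxE.
rewrite !big_ord_recr !big_ord0 /= !mxE.
case: i => [[|[|[|[|i]]]] Hi] //; rewrite /vl /pl /Dn /etaf /=; ring.
Qed.

Lemma pp_comp : (Pc^T *m (eta4 C *m Pc)) 0 0 = ppf.
Proof.
rewrite eta_nat !mxE !big_ord_recr !big_ord0 /= !mxE.
rewrite !big_ord_recr !big_ord0 /= !mxE /pl /ppf /etaf /=; ring.
Qed.

Lemma uu_comp : (Uc^T *m (eta4 C *m Uc)) 0 0 = uuf.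
Proof.
rewrite eta_nat !mxE !big_ord_recr !big_ord0 /= !mxE.
rewrite !big_ord_recr !big_ord0 /= !mxE /uuf /ue /ul /etaf /=; ring.
Qed.

Lemma Fv_comp : 2^-1 * \tr (Fm^T *m (eta4 C *m Fm *m eta4 C)) = Fvf.
Proof.
have h2 := two_neq0.
rewrite X_comp /mxtrace !big_ord_recr !big_ord0 /= !mxE.
rewrite !big_ord_recr !big_ord0 /= !mxE /Xn /Fn /Fvf /etaf /=; by field.
Qed.
End Frame.



Section Frame.
Variable C : numClosedFieldType.
Variables (f01 f02 f03 f12 f13 f23 q0 q1 q2 q3 LF LFF LFG LGG : C).

Local Notation pl := (pl q0 q1 q2 q3).
Local Notation pe := (pe q0 q1 q2 q3).
Local Notation ul := (ul f01 f02 f03 f12 f13 f23 q0 q1 q2 q3).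
Local Notation vl := (vl f01 f02 f03 f12 f13 f23 q0 q1 q2 q3).
Local Notation Fn := (Fn f01 f02 f03 f12 f13 f23).
Local Notation Dn := (Dn f01 f02 f03 f12 f13 f23).
Local Notation Fm := (\matrix_(i < 4, j < 4) Fn i j).
Local Notation Dm := (\matrix_(i < 4, j < 4) Dn i j).
Local Notation Pc := (\col_(i < 4) pl i).
Local Notation Uc := (\col_(i < 4) ul i).
Local Notation Vc := (\col_(i < 4) vl i).

Lemma Gv_comp : - 4^-1 * \tr (Fm^T *m (eta4 C *m Dm *m eta4 C)) = Gvf f01 f02 f03 f12 f13 f23.
Proof.
have h2 := two_neq0 C.
rewrite eta_nat /mxtrace !big_ord_recr !big_ord0 /= !mxE.
rewrite !big_ord_recr !big_ord0 /= !mxE.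
rewrite !big_ord_recr !big_ord0 /= !mxE.
rewrite !big_ord_recr !big_ord0 /= !mxE.
rewrite /Fn /Dn /Gvf /etaf /=; by field.
Qed.

Lemma Mfx_comp :
  (- 2 * LF * ppf q0 q1 q2 q3) *: 1%:M + ((2 * LF) *: (Pc *m Pc^T) - (4 * LFF) *: (Uc *m Uc^T)
   + (2 * LFG) *: (Uc *m Vc^T + Vc *m Uc^T) - LGG *: (Vc *m Vc^T)) *m eta4 C
  = \matrix_(b < 4, d < 4) mef f01 f02 f03 f12 f13 f23 q0 q1 q2 q3 LF LFF LFG LGG b d.
Proof.
rewrite eta_nat; apply/matrixP => b d; rewrite !mxE !big_ord_recr !big_ord0 /= !mxE.
rewrite !big_ord_recr !big_ord0 /= !mxE.
case: b => [[|[|[|[|b]]]] Hb] //; case: d => [[|[|[|[|d]]]] Hd] //;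
  rewrite /mef /pe /pl /ul /ue /vl /ve /etaf /=; ring.
Qed.

Lemma adjf_comp :
  \matrix_(b < 4, a < 4) (- 8 * LF * Qf f01 f02 f03 f12 f13 f23 q0 q1 q2 q3 LF LFF LFG LGG * pl b * pe a)
  = (- 8 * LF * Qf f01 f02 f03 f12 f13 f23 q0 q1 q2 q3 LF LFF LFG LGG) *: (Pc *m (eta4 C *m Pc)^T).
Proof.
rewrite eta_nat; apply/matrixP => b a; rewrite !mxE big_ord1 !mxE !big_ord_recr !big_ord0 /= !mxE.
case: a => [[|[|[|[|a]]]] Ha] //; rewrite /pe /pl /etaf /=; ring.
Qed.
End Frame.


Section AdjM.
Variable R : numClosedFieldType.

Lemma adjM_poly n (A B : 'M[{poly R}]_n) : \det A != 0 -> \det B != 0 ->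
  \adj (A *m B) = \adj B *m \adj A.
Proof.
move=> dA dB.
have eK : (\adj (A *m B) - \adj B *m \adj A) *m (A *m B) = 0.
  rewrite mulmxBl mul_adj_mx det_mulmx.
  have -> : \adj B *m \adj A *m (A *m B) = (\det A * \det B)%:M.
    rewrite mulmxA -[\adj B *m \adj A *m A]mulmxA mul_adj_mx.
    by rewrite mul_mx_scalar -scalemxAl mul_adj_mx scale_scalar_mx.
  by rewrite subrr.
have := congr1 (mulmx^~ (\adj (A *m B))) eK.
rewrite mul0mx -mulmxA mul_mx_adj mul_mx_scalar => /eqP.
rewrite scalemx_eq0 det_mulmx mulf_eq0 (negbTE dA) (negbTE dB) /=.
by rewrite subr_eq0 => /eqP.
Qed.

Lemma adjM n (A B : 'M[R]_n) : \adj (A *m B) = \adj B *m \adj A.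
Proof.
pose pA := char_poly_mx (- A); pose pB := char_poly_mx (- B).
have nz (M : 'M[R]_n) : \det (char_poly_mx M) != 0.
  by apply: monic_neq0; apply: char_poly_monic.
have := adjM_poly (nz (- A)) (nz (- B)).
move/(congr1 (map_mx (horner_eval 0))).
rewrite map_mxM !map_mx_adj map_mxM.
have ev (M : 'M[R]_n) : map_mx (horner_eval 0) (char_poly_mx (- M)) = M.
  apply/matrixP => i j; rewrite !mxE /horner_eval /=.
  rewrite !hornerE; case: eqP => _ /=; rewrite ?hornerE ?horner_polyC /=; ring.
by rewrite !ev.
Qed.
End AdjM.


Section AdjRank.
Variable R : numClosedFieldType.

Lemma pid_nat r : (pid_mx r : 'M[R]_4) =
  \matrix_(i < 4, j < 4) ((i == j :> nat) && (i < r)%N)%:R.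
Proof. by apply/matrixP => i j; rewrite !mxE. Qed.

Lemma adj_pid_small r : (r <= 2)%N -> \adj (pid_mx r : 'M[R]_4) = 0.
Proof.
move=> hr; apply/matrixP => b a; rewrite pid_nat (adj4f (fun x y => ((x == y) && (x < r)%N)%:R)) mxE.
case: r hr => [|[|[|//]]] _;
case: b => [[|[|[|[|b]]]] Hb] //; case: a => [[|[|[|[|a]]]] Ha] //;
 rewrite /det3e /bump /=; ring.
Qed.

Lemma adj_pid_big r : (3 <= r)%N -> \adj (pid_mx r : 'M[R]_4) != 0.
Proof.
move=> hr; apply/negP => /eqP/matrixP/(_ ord_max ord_max).
rewrite pid_nat (adj4f (fun x y => ((x == y) && (x < r)%N)%:R)) mxE /det3e /bump /=.
case: r hr => [|[|[|[|r]]]] //= _ H;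
 (have : (1 : R) = 0 by rewrite -H; ring); by move/eqP; rewrite oner_eq0.
Qed.

Lemma adj0_rank (A : 'M[R]_4) : (\adj A == 0) = (\rank A <= 2)%N.
Proof.
have eA := mulmx_ebase A.
set L := col_ebase A in eA *; set U := row_ebase A in eA *.
have uL : \det L != 0 by rewrite -unitfE -unitmxE col_ebase_unit.
have uU : \det U != 0 by rewrite -unitfE -unitmxE row_ebase_unit.
rewrite -{1}eA !adjM.
case: (leqP (\rank A) 2) => hr.
  by rewrite adj_pid_small // mul0mx mulmx0 eqxx.
apply/negP => /eqP H.
have := congr1 (fun X => U *m X *m L) H.
rewrite mulmx0 mul0mx !mulmxA mul_mx_adj -!mulmxA mul_adj_mx.
rewrite mul_mx_scalar mul_scalar_mx => /eqP.
rewrite !scalemx_eq0 (negbTE uU) (negbTE uL) /=.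
by apply/negP; apply: adj_pid_big.
Qed.
End AdjRank.


Definition colv (C : numClosedFieldType) (x : 'I_4 -> C) : 'cV[C]_4 := \col_(i < 4) x i.

Lemma adj_unit (C : numClosedFieldType) (P : 'M[C]_4) : P \in unitmx -> \adj P = \det P *: invmx P.
Proof.
move=> uP; have dP : \det P != 0 by rewrite -unitfE -unitmxE.
by rewrite /invmx uP scalerA mulfV // scale1r.
Qed.

Lemma adj_conj (C : numClosedFieldType) (P A : 'M[C]_4) : P \in unitmx ->
  \adj (invmx P *m A *m P) = invmx P *m \adj A *m P.
Proof.
move=> uP; have dP : \det P != 0 by rewrite -unitfE -unitmxE.
have uiP : invmx P \in unitmx by rewrite unitmx_inv.
rewrite !adjM (adj_unit uP) (adj_unit uiP) invmxK det_inv.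
by rewrite -scalemxAl -!scalemxAr scalerA mulfV // scale1r mulmxA.
Qed.

Section Main.
Variables (C : numClosedFieldType) (g E F : 'M[C]_4) (p : 'I_4 -> C).
Hypothesis g_lorentz : E^T *m g *m E = eta4 C.
Hypothesis F_anti : F^T = - F.

Local Notation eta := (eta4 C).
Local Notation h := (ginv g).

Lemma detE_neq0 : \det E != 0.
Proof.
apply/eqP => H; have := congr1 determinant g_lorentz.
rewrite !det_mulmx det_tr H eta_det mulr0 => /eqP.
by rewrite eq_sym oppr_eq0 oner_eq0.
Qed.

Lemma Et_unit : E^T \in unitmx.
Proof. by rewrite unitmx_tr unitmxE unitfE detE_neq0. Qed.

Lemma h_eq : h = E *m eta *m E^T.
Proof.
have gE : g *m E = invmx E^T *m eta.
  by rewrite -g_lorentz -!mulmxA mulKmx // Et_unit.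
have gX : g *m (E *m eta *m E^T) = 1%:M.
  by rewrite !mulmxA gE -[invmx E^T *m eta *m eta]mulmxA eta_mul mulmx1 mulVmx // Et_unit.
have gu : g \in unitmx by case: (mulmx1_unit gX).
by rewrite /ginv -[invmx g]mulmx1 -gX mulKmx.
Qed.

Lemma h_tr : h^T = h.
Proof. by rewrite h_eq !trmx_mul trmxK eta_tr mulmxA. Qed.

Lemma h_sym i j : h i j = h j i.
Proof. by rewrite -[in LHS]h_tr mxE. Qed.

Lemma raise_mx x a : raise g x a = (h *m colv x) a 0.
Proof. by rewrite /raise mxE; apply: eq_bigr => b _; rewrite mxE. Qed.

Lemma dot_mx x y : dot g x y = ((colv x)^T *m (h *m colv y)) 0 0.
Proof. by rewrite /dot mxE; apply: eq_bigr => a _; rewrite raise_mx /colv !mxE. Qed.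

Lemma contr2 (X : 'I_4 -> 'I_4 -> C) a b :
  \sum_c \sum_d h a c * h b d * X c d = (h *m \matrix_(c, d) X c d *m h^T) a b.
Proof.
rewrite mxE; under [RHS]eq_bigr => d _ do rewrite !mxE mulr_suml.
rewrite [RHS]exchange_big; apply: eq_bigr => c _; apply: eq_bigr => d _.
by rewrite mxE; ring.
Qed.

Definition Fd := \matrix_(a < 4, b < 4) Fdual g E F a b.

Lemma uc_mx : colv (uvec g F p) = F *m (h *m colv p).
Proof.
apply/matrixP => i j; rewrite (ord1 j) !mxE /uvec; apply: eq_bigr => k _.
by rewrite raise_mx.
Qed.

Lemma vc_mx : colv (vvec g E F p) = Fd *m (h *m colv p).
Proof.
apply/matrixP => i j; rewrite (ord1 j) !mxE /vvec; apply: eq_bigr => k _.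
by rewrite raise_mx !mxE.
Qed.

Lemma Finv_mx : Finv g F = 2^-1 * \tr (F^T *m (h *m F *m h^T)).
Proof.
rewrite /Finv -sum_tr; congr (_ * _); apply: eq_bigr => a _; apply: eq_bigr => b _.
rewrite /Fup contr2; congr (_ * (_ *m _ *m _) _ _).
by apply/matrixP => i j; rewrite mxE.
Qed.

Lemma Ginv_mx : Ginv g E F = - 4^-1 * \tr (F^T *m (h *m Fd *m h^T)).
Proof.
rewrite /Ginv -sum_tr; congr (_ * _); apply: eq_bigr => a _; apply: eq_bigr => b _.
by rewrite /Fdualup contr2.
Qed.

Lemma outer_h (x y : 'cV[C]_4) b d : (x *m y^T *m h) b d = x b 0 * (h *m y) d 0.
Proof.
rewrite -mulmxA mxE big_ord1 !mxE; congr (_ * _); apply: eq_bigr => k _.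
by rewrite !mxE h_sym mulrC.
Qed.
End Main.


Section Main2.
Variables (C : numClosedFieldType) (g E F : 'M[C]_4) (p : 'I_4 -> C) (LF LFF LFG LGG : C).
Hypothesis g_lorentz : E^T *m g *m E = eta4 C.
Hypothesis F_anti : F^T = - F.

Local Notation eta := (eta4 C).
Local Notation h := (ginv g).
Local Notation pc := (colv p).
Local Notation uc := (colv (uvec g F p)).
Local Notation vc := (colv (vvec g E F p)).

Definition Smx := (2 * LF) *: (pc *m pc^T) - (4 * LFF) *: (uc *m uc^T)
  + (2 * LFG) *: (uc *m vc^T + vc *m uc^T) - LGG *: (vc *m vc^T).

Lemma outer_h' (x y : 'cV[C]_4) : x *m y^T *m h = \matrix_(b, d) (x b 0 * (h *m y) d 0).
Proof. by apply/matrixP => b d; rewrite (outer_h g_lorentz) mxE. Qed.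

Lemma Mm_decomp : Mmat g E F LF LFF LFG LGG p =
  (- 2 * LF * dot g p p) *: 1%:M + Smx *m h.
Proof.
apply/matrixP => b d; rewrite /Mmat /Smx.
rewrite !(mulmxDl, mulmxBl, mulNmx) -!scalemxAl !mulmxDl !outer_h'.
rewrite !mxE !raise_mx /colv !mxE.
ring.
Qed.

Definition Mfx := (- 2 * LF * dot g p p) *: 1%:M + (E^T *m Smx *m E) *m eta.

Lemma Mm_conj : Mmat g E F LF LFF LFG LGG p = invmx E^T *m Mfx *m E^T.
Proof.
have uE := Et_unit g_lorentz.
rewrite Mm_decomp (h_eq g_lorentz) /Mfx mulmxDr mulmxDl -scalemxAr mulmx1 -scalemxAl.
rewrite (mulVmx uE) !mulmxA (mulVmx uE) mul1mx.
by [].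
Qed.

Definition Fp := E^T *m F *m E.
Definition pp' := E^T *m pc.
Definition Fdp := E^T *m Fd g E F *m E.

Lemma u'_eq : E^T *m uc = Fp *m eta *m pp'.
Proof. by rewrite uc_mx (h_eq g_lorentz) /Fp /pp' !mulmxA. Qed.

Lemma v'_eq : E^T *m vc = Fdp *m eta *m pp'.
Proof. by rewrite vc_mx (h_eq g_lorentz) /Fdp /pp' !mulmxA. Qed.

Lemma conj_outer (x y : 'cV[C]_4) : E^T *m (x *m y^T) *m E = (E^T *m x) *m (E^T *m y)^T.
Proof. by rewrite trmx_mul trmxK !mulmxA. Qed.

Lemma S'_eq : E^T *m Smx *m E =
  (2 * LF) *: (pp' *m pp'^T) - (4 * LFF) *: ((E^T *m uc) *m (E^T *m uc)^T)
  + (2 * LFG) *: ((E^T *m uc) *m (E^T *m vc)^T + (E^T *m vc) *m (E^T *m uc)^T)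
  - LGG *: ((E^T *m vc) *m (E^T *m vc)^T).
Proof.
rewrite /Smx !(mulmxDl, mulmxBl, mulmxDr, mulmxBr, mulNmx, mulmxN) -!scalemxAr -!scalemxAl.
by rewrite !(mulmxDl, mulmxDr) !conj_outer.
Qed.

Lemma frame_dot (x y : 'cV[C]_4) :
  x^T *m (h *m y) = (E^T *m x)^T *m (eta *m (E^T *m y)).
Proof. by rewrite (h_eq g_lorentz) trmx_mul trmxK !mulmxA. Qed.

Lemma pp_eq : dot g p p = (pp'^T *m (eta *m pp')) 0 0.
Proof. by rewrite dot_mx frame_dot. Qed.

Lemma uu_eq : dot g (uvec g F p) (uvec g F p) =
  ((E^T *m uc)^T *m (eta *m (E^T *m uc))) 0 0.
Proof. by rewrite dot_mx frame_dot. Qed.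

Lemma frame_tr (X Y : 'M[C]_4) :
  \tr (X^T *m (h *m Y *m h^T)) = \tr ((E^T *m X *m E)^T *m (eta *m (E^T *m Y *m E) *m eta)).
Proof.
rewrite (h_tr g_lorentz) (h_eq g_lorentz) !trmx_mul trmxK !mulmxA.
by rewrite mxtrace_mulC !mulmxA.
Qed.

Lemma Fv_eq : Finv g F = 2^-1 * \tr (Fp^T *m (eta *m Fp *m eta)).
Proof. by rewrite Finv_mx frame_tr. Qed.

Lemma Gv_eq : Ginv g E F = - 4^-1 * \tr (Fp^T *m (eta *m Fdp *m eta)).
Proof. by rewrite Ginv_mx frame_tr. Qed.

Lemma Fdp_eq al be : Fdp al be =
  2^-1 * \sum_c \sum_d levi C al be c d * (eta *m Fp *m eta) c d.
Proof.
rewrite -(dual_contract _ _ _ (detE_neq0 g_lorentz)).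
rewrite /Fdp mxE; apply: eq_bigr => b _; rewrite mxE; congr (_ * _).
apply: eq_bigr => a _; rewrite !mxE /Fdual; congr (_ * (_ * _)).
apply: eq_bigr => c _; apply: eq_bigr => d _.
rewrite /eps /Fup contr2 (h_tr g_lorentz) (h_eq g_lorentz) /Fp.
have -> : \matrix_(c0, d0) F c0 d0 = F by apply/matrixP => i j; rewrite mxE.
by rewrite !mulmxA.
Qed.
End Main2.


Lemma oE k (H : (k < 4)%N) : Ordinal H = inord k :> 'I_4.
Proof. by apply: val_inj; rewrite /= inordK. Qed.

Section Main3.
Variables (C : numClosedFieldType) (g E F : 'M[C]_4) (p : 'I_4 -> C) (LF LFF LFG LGG : C).
Hypothesis g_lorentz : E^T *m g *m E = eta4 C.
Hypothesis F_anti : F^T = - F.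

Local Notation eta := (eta4 C).
Local Notation h := (ginv g).
Local Notation F' := (Fp E F).
Local Notation P' := (pp' E p).
Local Notation f01 := (F' (inord 0) (inord 1)).
Local Notation f02 := (F' (inord 0) (inord 2)).
Local Notation f03 := (F' (inord 0) (inord 3)).
Local Notation f12 := (F' (inord 1) (inord 2)).
Local Notation f13 := (F' (inord 1) (inord 3)).
Local Notation f23 := (F' (inord 2) (inord 3)).
Local Notation q0 := (P' (inord 0) 0).
Local Notation q1 := (P' (inord 1) 0).
Local Notation q2 := (P' (inord 2) 0).
Local Notation q3 := (P' (inord 3) 0).

Lemma Fp_anti i j : F' i j = - F' j i.
Proof.
have : F'^T = - F' by rewrite /Fp !trmx_mul trmxK F_anti mulNmx mulmxN mulmxA.
by move/matrixP/(_ j i); rewrite !mxE.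
Qed.

Lemma Fp_diag i : F' i i = 0.
Proof.
have := Fp_anti i i; move/eqP; rewrite -subr_eq0 opprK -mulr2n mulrn_eq0 /=.
by move/eqP.
Qed.

Lemma Fp_nat : F' = \matrix_(i < 4, j < 4) Fn f01 f02 f03 f12 f13 f23 i j.
Proof.
apply/matrixP => i j; rewrite [RHS]mxE.
case: i => [[|[|[|[|i]]]] Hi] //; case: j => [[|[|[|[|j]]]] Hj] //;
  rewrite /Fn /= !oE; first [done | by rewrite Fp_diag | by rewrite Fp_anti].
Qed.

Lemma Pp_nat : P' = \col_(i < 4) pl q0 q1 q2 q3 i.
Proof.
apply/matrixP => i j; rewrite (ord1 j) [RHS]mxE.
by case: i => [[|[|[|[|i]]]] Hi] //; rewrite [in RHS]/pl /= oE.
Qed.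

Lemma Fdp_nat : Fdp g E F = \matrix_(i < 4, j < 4) Dn f01 f02 f03 f12 f13 f23 i j.
Proof.
apply/matrixP => al be.
have H := Fd_comp f01 f02 f03 f12 f13 f23; move/matrixP: H => /(_ al be) H.
rewrite [X in X = _]mxE [X in _ = X]mxE in H.
by rewrite [RHS]mxE -H (Fdp_eq F g_lorentz) [in LHS]Fp_nat X_comp.
Qed.

Lemma u'_nat : E^T *m colv (uvec g F p) = \col_(i < 4) ul f01 f02 f03 f12 f13 f23 q0 q1 q2 q3 i.
Proof. by rewrite (u'_eq F p g_lorentz) [in LHS]Fp_nat [in LHS]Pp_nat u_comp. Qed.

Lemma v'_nat : E^T *m colv (vvec g E F p) = \col_(i < 4) vl f01 f02 f03 f12 f13 f23 q0 q1 q2 q3 i.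
Proof. by rewrite (v'_eq F p g_lorentz) [in LHS]Fdp_nat [in LHS]Pp_nat v_comp. Qed.

Lemma pp_nat : dot g p p = ppf q0 q1 q2 q3.
Proof. by rewrite (pp_eq p g_lorentz) [in LHS]Pp_nat pp_comp. Qed.

Lemma uu_nat : dot g (uvec g F p) (uvec g F p) = uuf f01 f02 f03 f12 f13 f23 q0 q1 q2 q3.
Proof. by rewrite (uu_eq F p g_lorentz) u'_nat uu_comp. Qed.

Lemma Fv_nat : Finv g F = Fvf f01 f02 f03 f12 f13 f23.
Proof. by rewrite (Fv_eq F g_lorentz) [in LHS]Fp_nat Fv_comp. Qed.

Lemma Gv_nat : Ginv g E F = Gvf f01 f02 f03 f12 f13 f23.
Proof. by rewrite (Gv_eq F g_lorentz) [in LHS]Fp_nat [in LHS]Fdp_nat Gv_comp. Qed.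

Lemma Mfx_nat : Mfx g E F p LF LFF LFG LGG =
  \matrix_(b < 4, d < 4) mef f01 f02 f03 f12 f13 f23 q0 q1 q2 q3 LF LFF LFG LGG b d.
Proof.
by rewrite /Mfx S'_eq [in LHS]Pp_nat u'_nat v'_nat pp_nat Mfx_comp.
Qed.

Local Notation pp := (dot g p p).
Local Notation uu := (dot g (uvec g F p) (uvec g F p)).
Local Notation Qg := (Mc LF LFF LFG LGG (Finv g F) (Ginv g E F) * pp ^+ 2
   + Nc LF LFF LFG LGG (Finv g F) * pp * uu + Pc LFF LFG LGG * uu ^+ 2).

Lemma Q_eq : Qg = Qf f01 f02 f03 f12 f13 f23 q0 q1 q2 q3 LF LFF LFG LGG.
Proof. by rewrite pp_nat uu_nat Fv_nat Gv_nat. Qed.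

Lemma adj_main (b a : 'I_4) :
  \adj (Mmat g E F LF LFF LFG LGG p) b a = - 8 * LF * Qg * p b * raise g p a.
Proof.
have uE := Et_unit g_lorentz.
rewrite (Mm_conj F p LF LFF LFG LGG g_lorentz) (adj_conj _ uE) Mfx_nat.
have -> : \adj (\matrix_(b0 < 4, d < 4) mef f01 f02 f03 f12 f13 f23 q0 q1 q2 q3 LF LFF LFG LGG b0 d)
  = \matrix_(b0 < 4, a0 < 4) (- 8 * LF * Qf f01 f02 f03 f12 f13 f23 q0 q1 q2 q3 LF LFF LFG LGG
       * pl q0 q1 q2 q3 b0 * pe q0 q1 q2 q3 a0).
  by apply/matrixP => x y; rewrite frame_adj [RHS]mxE.
rewrite adjf_comp -Pp_nat -Q_eq /pp'.
rewrite -scalemxAr -scalemxAl !mulmxA (mulVmx uE) mul1mx.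
have -> : colv p *m (eta *m E^T *m colv p)^T *m E^T = colv p *m (h *m colv p)^T.
  by rewrite (h_eq g_lorentz) !trmx_mul trmxK eta_tr !mulmxA.
by rewrite raise_mx !mxE big_ord1 /colv !mxE; ring.
Qed.
End Main3.


Lemma alg_part (C : numClosedFieldType) (LF m n P x y : C) : LF != 0 -> m != 0 ->
  (LF * (m * x ^+ 2 + n * x * y + P * y ^+ 2) = 0 <->
   (x + sigma true m n P * y) * (x + sigma false m n P * y) = 0).
Proof.
move=> hL hm; have h2 : (2 : C) != 0 by rewrite pnatr_eq0.
have h4 : (4 : C) != 0 by rewrite pnatr_eq0.
rewrite /sigma /=; set s := sqrtC _.
have hs : s ^+ 2 = n ^+ 2 / (4 * m ^+ 2) - P / m by rewrite /s sqrtCK.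
have -> : (x + (n / (2 * m) + 1 * s) * y) * (x + (n / (2 * m) + -1 * s) * y)
  = (m * x ^+ 2 + n * x * y + P * y ^+ 2) / m
    + (s ^+ 2 - (n ^+ 2 / (4 * m ^+ 2) - P / m)) * (- y ^+ 2) by field.
rewrite hs subrr mul0r addr0; split.
  by move/eqP; rewrite mulf_eq0 (negbTE hL) /= => /eqP ->; rewrite mul0r.
move/eqP; rewrite mulf_eq0 invr_eq0 (negbTE hm) orbF => /eqP ->.
by rewrite mulr0.
Qed.

Section Main4.
Variables (C : numClosedFieldType) (g E F : 'M[C]_4) (p : 'I_4 -> C) (LF LFF LFG LGG : C).
Hypothesis g_lorentz : E^T *m g *m E = eta4 C.
Hypothesis F_anti : F^T = - F.

Local Notation eta := (eta4 C).
Local Notation h := (ginv g).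
Local Notation pp := (dot g p p).
Local Notation uu := (dot g (uvec g F p) (uvec g F p)).
Local Notation Qg := (Mc LF LFF LFG LGG (Finv g F) (Ginv g E F) * pp ^+ 2
   + Nc LF LFF LFG LGG (Finv g F) * pp * uu + Pc LFF LFG LGG * uu ^+ 2).
Local Notation Mm := (Mmat g E F LF LFF LFG LGG p).

Lemma g_unit : g \in unitmx.
Proof.
rewrite unitmxE unitfE; apply/eqP => H; have := congr1 determinant g_lorentz.
rewrite !det_mulmx H mulr0 mul0r eta_det => /eqP.
by rewrite eq_sym oppr_eq0 oner_eq0.
Qed.

Lemma h_unit : h \in unitmx.
Proof. by rewrite /ginv unitmx_inv g_unit. Qed.

Lemma quad (A : 'M[C]_4) (x : 'I_4 -> C) :
  \sum_(b < 4) \sum_(c < 4) A b c * x b * x c = ((colv x)^T *m (A *m colv x)) 0 0.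
Proof.
rewrite mxE; apply: eq_bigr => b _; rewrite !mxE mulr_sumr; apply: eq_bigr => c _.
by rewrite !mxE; ring.
Qed.

Lemma optical_eq sig : optical g F sig p = pp + sig * uu.
Proof.
rewrite /optical.
pose FU := h *m F *m h^T.
have eFU : forall x y, Fup g F x y = FU x y.
  move=> x y; rewrite /Fup (contr2 g (fun c d => F c d)).
  by congr ((_ *m _ *m _) _ _); apply/matrixP => i j; rewrite mxE.
have hg : h^T *m g = 1%:M by rewrite (h_tr g_lorentz) /ginv mulVmx // g_unit.
have K : forall b c, \sum_d Fup g F b d * (\sum_e Fup g F c e * g e d)
    = (h *m F *m h *m F^T *m h) b c.
  move=> b c.
  have -> : h *m F *m h *m F^T *m h = FU *m (h *m F)^T.
    by rewrite /FU trmx_mul (h_tr g_lorentz) !mulmxA.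
  rewrite mxE; apply: eq_bigr => d _; rewrite eFU; congr (_ * _); rewrite [RHS]mxE.
  have -> : (h *m F) c d = (FU *m g) c d by rewrite /FU -mulmxA hg mulmx1.
  by rewrite mxE; apply: eq_bigr => e _; rewrite eFU.
under eq_bigr => b _ do under eq_bigr => c _ do rewrite K.
have -> : \sum_(b < 4) \sum_(c < 4) (h b c + sig * (h *m F *m h *m F^T *m h) b c) * p b * p c
   = \sum_(b < 4) \sum_(c < 4) (h + sig *: (h *m F *m h *m F^T *m h)) b c * p b * p c.
  by apply: eq_bigr => b _; apply: eq_bigr => c _; rewrite !mxE.
rewrite quad mulmxDl mulmxDr -scalemxAl -scalemxAr mxE [in X in _ + X]mxE.
rewrite !dot_mx uc_mx; congr (_ + _ * _).
rewrite !trmx_mul (h_tr g_lorentz) F_anti !mulmxA.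
by rewrite !(mulNmx, mulmxN).
Qed.

Lemma rank_part : (2 <= \rank (kermx Mm^T))%N <-> LF * Qg = 0.
Proof.
rewrite mxrank_ker mxrank_tr.
have rl := rank_leq_row Mm.
have -> : (2 <= 4 - \rank Mm)%N = (\rank Mm <= 2)%N.
  by move: rl; case: (\rank Mm) => [|[|[|[|[|r]]]]].
rewrite -adj0_rank; split; last first.
  move=> H; apply/eqP/matrixP => b a.
  by rewrite (adj_main p LF LFF LFG LGG g_lorentz F_anti) mxE -(mulrA (-8)) H mulr0 !mul0r.
move/eqP => H.
case: (boolP [exists b, p b != 0]) => [/existsP [b pb] | /existsPn p0].
  have : h *m colv p != 0.
    apply/negP => /eqP hp0.
    have := congr1 (mulmx (invmx h)) hp0; rewrite mulKmx ?h_unit // mulmx0.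
    by move/matrixP/(_ b 0); rewrite !mxE => /eqP; rewrite (negbTE pb).
  case/matrix0Pn => a [j]; rewrite (ord1 j) -raise_mx => ha.
  move/matrixP: H => /(_ b a); rewrite (adj_main p LF LFF LFG LGG g_lorentz F_anti) mxE.
  move/eqP; rewrite !mulf_eq0 (negbTE pb) (negbTE ha) !orbF oppr_eq0 pnatr_eq0 /=.
  by rewrite -mulf_eq0 => /eqP.
have pz : forall b, p b = 0 by move=> b; apply/eqP; move: (p0 b); rewrite negbK.
have rz : forall a, raise g p a = 0.
  by move=> a; rewrite /raise big1 // => b _; rewrite pz mulr0.
have uz : forall a, uvec g F p a = 0.
  by move=> a; rewrite /uvec big1 // => b _; rewrite rz mulr0.
have -> : pp = 0 by rewrite /dot big1 // => a _; rewrite pz mul0r.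
have -> : uu = 0 by rewrite /dot big1 // => a _; rewrite uz mul0r.
by rewrite expr0n /= !(mulr0, mul0r, addr0).
Qed.
End Main4.

Theorem mainTheorem3 (C : numClosedFieldType)
    (g E F : 'M[C]_4) (p : 'I_4 -> C) (LF LFF LFG LGG : C)
    (g_real : g \is a mxOver Num.real) (E_real : E \is a mxOver Num.real)
    (F_real : F \is a mxOver Num.real) (p_real : forall a, p a \is Num.real)
    (LF_real : LF \is Num.real) (LFF_real : LFF \is Num.real)
    (LFG_real : LFG \is Num.real) (LGG_real : LGG \is Num.real)
    (g_sym : g^T = g)
    (g_lorentz : E^T *m g *m E = eta4 C)
    (F_anti : F^T = - F) :
  let Fv := Finv g F in
  let Gv := Ginv g E F in
  let P := Pc LFF LFG LGG in
  let M := Mc LF LFF LFG LGG Fv Gv in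
  let N := Nc LF LFF LFG LGG Fv in
  let u := uvec g F p in
  let pp := dot g p p in
  let uu := dot g u u in
  let Mm := Mmat g E F LF LFF LFG LGG p in
  let Q := M * pp ^+ 2 + N * pp * uu + P * uu ^+ 2 in
  (forall b a : 'I_4, \adj Mm b a = - 8 * LF * Q * p b * raise g p a)
  /\ ((2 <= \rank (kermx Mm^T))%N <-> LF * Q = 0)
  /\ (LF != 0 -> M != 0 ->
        (LF * Q = 0 <->
         optical g F (sigma true M N P) p * optical g F (sigma false M N P) p
           = 0)).
Proof.
move=> Fv Gv P M N u pp uu Mm Q.
split; first by move=> b a; exact: (adj_main p LF LFF LFG LGG g_lorentz F_anti b a).
split; first exact: (rank_part p LF LFF LFG LGG g_lorentz F_anti).
move=> hL hM.
rewrite !(optical_eq p g_lorentz F_anti).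
exact: alg_part.
Qed.
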